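(* The undirected graph $G^*_u$ defined in the context is perfect.
   Context: Consider the three-receiver unicast index coding problem with 12 messages indexed by $[12]$, where receiver $u_i$ demands the messages indexed by $W_i$ and knows those indexed by $K_i$: $W_1=\{1,2,3,4\}$, $W_2=\{5,6,7,8\}$, $W_3=\{9,10,11,12\}$, $K_1=\{5,6,9,10\}$, $K_2=\{1,2,9,11\}$, $K_3=\{1,3,5,7\}$. $G^*$ is the directed graph on vertex set $[12]$ with a directed edge $(a,b)$ iff $b\in K_i$, where $i$ is the unique index with $a\in W_i$. $G^*_u$ is the undirected graph on $[12]$ in which $\{a,b\}$ is an edge iff both $(a,b)$ and $(b,a)$ are edges of $G^*$. An undirected graph is perfect if for every induced subgraph $H$, the independence number of $H$ equals its clique cover number. *)

(* Defs.v *)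
From mathcomp Require Import all_boot.
Set Implicit Arguments. Unset Strict Implicit. Unset Printing Implicit Defensive.

Section GraphNotions.
Variables (T : finType) (e : rel T).

Definition independent (I : {set T}) : bool :=
  [forall x in I, forall y in I, (x != y) ==> ~~ e x y].

Definition clique (C : {set T}) : bool :=
  [forall x in C, forall y in C, (x != y) ==> e x y].

Definition indep_num (S : {set T}) : nat :=
  \max_(I : {set T} | (I \subset S) && independent I) #|I|.

(* Clique cover number of G[S]: least number of cliques partitioning S.
   (A partition into singletons always exists, so the default #|T|.+1 is never
   attained.) *)
Definition clique_cover_num (S : {set T}) : nat :=
  \big[minn/#|T|.+1]_(P : {set {set T}} |
        partition P S && [forall C in P, clique C]) #|P|.

Definition perfect : Prop :=
  forall S : {set T}, indep_num S = clique_cover_num S.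
End GraphNotions.

(* Messages are [12] = {1,...,12}; vertex v : 'I_12 stands for message v.+1. *)
Definition W (i : nat) : seq nat :=
  match i with
  | 1 => [:: 1; 2; 3; 4]
  | 2 => [:: 5; 6; 7; 8]
  | 3 => [:: 9; 10; 11; 12]
  | _ => [::]
  end.

Definition K (i : nat) : seq nat :=
  match i with
  | 1 => [:: 5; 6; 9; 10]
  | 2 => [:: 1; 2; 9; 11]
  | 3 => [:: 1; 3; 5; 7]
  | _ => [::]
  end.

Definition msg (v : 'I_12) : nat := v.+1.

Definition Gstar : rel 'I_12 :=
  fun a b => [exists i : 'I_3, (msg a \in W i.+1) && (msg b \in K i.+1)].

Definition Gstar_u : rel 'I_12 := fun a b => Gstar a b && Gstar b a.

(* Main.v *)
Require Import Defs.
From mathcomp Require Import all_boot.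
Set Implicit Arguments. Unset Strict Implicit. Unset Printing Implicit Defensive.

Section Gen.
Variables (T : finType) (e : rel T).

Lemma core (S I : {set T}) (P : {set {set T}}) :
  I \subset S -> independent e I -> partition P S -> [forall C in P, clique e C] ->
  #|I| <= #|P|.
Proof.
move=> sIS indI partP cliq.
move/and3P: partP => [/eqP covP _ _].
have inj : {in I &, injective (pblock P)}.
  move=> x y hx hy eq.
  have xS : x \in cover P by rewrite covP (subsetP sIS).
  have yS : y \in cover P by rewrite covP (subsetP sIS).
  have hxb : x \in pblock P x by rewrite mem_pblock.
  have hyb : y \in pblock P x by rewrite eq mem_pblock.
  move/forallP: cliq => /(_ (pblock P x)); rewrite pblock_mem //= => /forallP /(_ x).
  rewrite hxb /= => /forallP /(_ y); rewrite hyb /= => /implyP H.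
  apply/eqP; apply/negPn/negP => ne.
  move/forallP: indI => /(_ x); rewrite hx => /forallP /(_ y).
  by rewrite hy ne /= (H ne).
rewrite -(card_in_imset inj); apply: subset_leq_card; apply/subsetP => _ /imsetP[x hx ->].
by apply: pblock_mem; rewrite covP (subsetP sIS).
Qed.

Lemma indep_le_cover (S : {set T}) : indep_num e S <= clique_cover_num e S.
Proof.
rewrite /indep_num; apply/bigmax_leqP => I /andP[sIS indI].
rewrite /clique_cover_num; apply: (big_ind (fun m => #|I| <= m)).
- by apply: leqW; apply: max_card.
- by move=> a b ha hb; rewrite leq_min ha hb.
- by move=> P /andP[pP cP]; apply: (core sIS).
Qed.

Lemma bigmin_le (I : eqType) (r : seq I) (p : pred I) (F : I -> nat) x i0 :
  i0 \in r -> p i0 -> \big[minn/x]_(i <- r | p i) F i <= F i0.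
Proof.
elim: r => [|j r IH] //= hin hp; rewrite big_cons.
move: hin; rewrite inE => /orP [/eqP <-|hr].
  by rewrite hp geq_minl.
case: (p j); last exact: IH.
by rewrite geq_min IH ?orbT.
Qed.

Lemma cover_le (S : {set T}) (P : {set {set T}}) : partition P S -> [forall C in P, clique e C] ->
  clique_cover_num e S <= #|P|.
Proof.
move=> pP cP; rewrite /clique_cover_num.
by apply: bigmin_le; rewrite ?mem_index_enum ?pP ?cP.
Qed.

Lemma le_indep (S I : {set T}) : I \subset S -> independent e I -> #|I| <= indep_num e S.
Proof.
move=> sIS indI; rewrite /indep_num.
by apply: (@leq_bigmax_cond _ (fun I : {set T} => (I \subset S) && independent e I) (fun I : {set T} => #|I|) I); rewrite sIS indI.
Qed.
End Gen.


Definition ords : seq 'I_12 :=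
  [:: @Ordinal 12 0 isT; @Ordinal 12 1 isT; @Ordinal 12 2 isT; @Ordinal 12 3 isT;
      @Ordinal 12 4 isT; @Ordinal 12 5 isT; @Ordinal 12 6 isT; @Ordinal 12 7 isT;
      @Ordinal 12 8 isT; @Ordinal 12 9 isT; @Ordinal 12 10 isT; @Ordinal 12 11 isT].

Lemma mem_ords (x : 'I_12) : x \in ords.
Proof.
have -> : ords = [seq x <- ords | true] by [].
by rewrite -(mem_map val_inj) (_ : map val _ = iota 0 12) // mem_iota ltn_ord.
Qed.

Lemma ex3 (P : 'I_3 -> bool) : [exists i, P i] = [|| P (@Ordinal 3 0 isT), P (@Ordinal 3 1 isT) | P (@Ordinal 3 2 isT)].
Proof.
apply/existsP/idP.
  case=> -[m Hi] H; apply/or3P.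
  case: m Hi H => [|[|[|//]]] Hi H; [constructor 1|constructor 2|constructor 3];
    by rewrite (_ : Ordinal _ = Ordinal Hi) //; apply: val_inj.
move=> /or3P[]; eauto.
Qed.

Definition edges : seq (nat * nat) :=
  [:: (0,4); (0,5); (1,4); (1,5); (0,8); (0,9); (2,8); (2,9); (4,8); (4,10); (6,8); (6,10)].

Definition adjn (a b : nat) : bool := ((a, b) \in edges) || ((b, a) \in edges).

Definition Gs' (a b : 'I_12) : bool :=
  let P := fun i : 'I_3 => (msg a \in W i.+1) && (msg b \in K i.+1) in
  [|| P (@Ordinal 3 0 isT), P (@Ordinal 3 1 isT) | P (@Ordinal 3 2 isT)].

Lemma adj_all : all (fun x => all (fun y => (Gs' x y && Gs' y x) == adjn x y) ords) ords.
Proof. vm_compute. reflexivity. Qed.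

Lemma adjE (x y : 'I_12) : Gstar_u x y = adjn x y.
Proof.
have := adj_all => /allP /(_ x (mem_ords x)) /allP /(_ y (mem_ords y)) /eqP <-.
by rewrite /Gstar_u /Gstar !ex3.
Qed.

Definition cliques : seq (seq nat) :=
  [:: [:: 0; 4; 8]; [:: 0; 5]; [:: 1; 4]; [:: 1; 5]; [:: 0; 9]; [:: 2; 8];
      [:: 2; 9]; [:: 4; 10]; [:: 6; 8]; [:: 6; 10]].

Fixpoint mis (n : nat) (s : seq 'I_12) : seq 'I_12 :=
  match n, s with
  | n'.+1, x :: r =>
      let a := mis n' r in
      let b := x :: mis n' [seq y <- r | ~~ adjn x (val y)] in
      if size a < size b then b else a
  | _, _ => [::]
  end.

Fixpoint cc (n : nat) (s : seq 'I_12) : seq (seq 'I_12) :=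
  match n, s with
  | n'.+1, x :: r =>
      foldr (fun C best =>
        if val x \in C then
          let cand := (x :: [seq y <- r | val y \in C]) :: cc n' [seq y <- r | val y \notin C] in
          if size cand < size best then cand else best
        else best) ([:: x] :: cc n' r) cliques
  | _, _ => [::]
  end.

Definition check (s : seq 'I_12) : bool :=
  let I := mis 12 s in let P := cc 12 s in
  [&& all (fun x => x \in s) I, uniq I,
      all (fun x => all (fun y => (x != y) ==> ~~ adjn (val x) (val y)) I) I,
      all (fun B => all (fun x => all (fun y => (x != y) ==> adjn (val x) (val y)) B) B) P,
      all (fun B1 : seq 'I_12 => all (fun B2 : seq 'I_12 => (B1 == B2) || all (fun x => x \notin B2) B1) P) P,
      all (fun B => B != [::]) P,
      all (fun x => x \in s) (flatten P), all (fun x => x \in flatten P) s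
    & size P <= size I].

Fixpoint subs (T : Type) (s : seq T) : seq (seq T) :=
  if s is x :: r then map (cons x) (subs r) ++ subs r else [:: [::]].

Lemma all_check : all check (subs ords).
Proof. vm_compute. reflexivity. Qed.

Lemma card_fin_le (T U : finType) (f : seq U -> {set T}) (I : seq T) (P : seq (seq U)) :
  uniq I -> size P <= size I -> #|[set A in map f P]| <= #|[set x in I]|.
Proof.
move=> uI le; rewrite !cardsE (card_uniqP uI).
by apply: leq_trans (card_size _) _; rewrite size_map.
Qed.

Lemma subs_filter (T : eqType) (p : pred T) (s : seq T) : filter p s \in subs s.
Proof.
elim: s => [|x r IH] /=; first by rewrite mem_seq1.
by case: (p x); rewrite mem_cat ?IH ?orbT // map_f.
Qed.

Theorem theorem3 : perfect Gstar_u.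
Proof.
move=> S.
set s := [seq x <- ords | x \in S].
have hs : forall x, (x \in s) = (x \in S) by move=> x; rewrite mem_filter mem_ords andbT.
have := allP all_check s (subs_filter _ _); rewrite /check.
set I := mis 12 s; set P := cc 12 s.
move/and5P => [h1 h2 h3 h4 /and5P [h5 h6 h7 h8 h9]].
apply/eqP; rewrite eqn_leq indep_le_cover /=.
set Pset := [set A in map (fun B => [set x in B]) P].
set Iset := [set x in I].
have partP : partition Pset S.
  apply/and3P; split.
  - apply/eqP/setP => x; apply/bigcupP/idP.
      move=> [A]; rewrite inE => /mapP[b hb ->]; rewrite inE => hx.
      by rewrite -hs; apply: (allP h7); apply/flattenP; exists b.
    rewrite -hs => /(allP h8) /flattenP [b hb hx].
    by exists [set x in b]; rewrite inE ?map_f.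
  - apply/trivIsetP => A B; rewrite !inE => /mapP[b1 hb1 ->] /mapP[b2 hb2 ->] neq.
    move/allP: h5 => /(_ b1 hb1) /allP /(_ b2 hb2) /orP [/eqP eb|hall].
      by rewrite eb eqxx in neq.
    rewrite disjoint_subset; apply/subsetP => x; rewrite !inE => hx1.
    by move/allP: hall => /(_ x hx1).
  - apply/negP; rewrite inE => /mapP[b hb].
    move/allP: h6 => /(_ b hb); case: b hb => [|y b] //= hb _.
    by move/setP/(_ y); rewrite !inE eqxx.
have cliqP : [forall C in Pset, clique Gstar_u C].
  apply/forallP => C; apply/implyP; rewrite inE => /mapP[b hb ->].
  apply/forallP => x; apply/implyP; rewrite inE => hx.
  apply/forallP => y; apply/implyP; rewrite inE => hy.
  apply/implyP => ne; rewrite adjE.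
  by move/allP: h4 => /(_ b hb) /allP /(_ x hx) /allP /(_ y hy) /implyP; apply.
have indP : independent Gstar_u Iset.
  apply/forallP => x; apply/implyP; rewrite inE => hx.
  apply/forallP => y; apply/implyP; rewrite inE => hy.
  apply/implyP => ne; rewrite adjE.
  by move/allP: h3 => /(_ x hx) /allP /(_ y hy) /implyP; apply.
have subI : Iset \subset S.
  by apply/subsetP => x; rewrite inE -hs; apply: (allP h1).
apply: leq_trans (cover_le partP cliqP) _.
apply: leq_trans (le_indep subI indP).
exact: (card_fin_le (fun B => [set x in B]) h2 h9).
Qed.
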